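(* Let $G$ and $H$ be finite AC-groups with $|G|=|H|$. Then $A_G(t)=A_H(t)$ if and only if $B_G(t)=B_H(t)$.
   Context: A finite group $G$ is an AC-group if the centralizer of every non-central element is abelian. For a finite group $G$ and $n\ge 0$, $G$ acts on $G^n$ by simultaneous conjugation. Let $G^{(n)}\subseteq G^n$ be the set of $n$-tuples of pairwise commuting elements. Let $\alpha_{G,n}$ (resp. $\beta_{G,n}$) be the number of $G$-orbits on $G^n$ (resp. on $G^{(n)}$), and set $A_G(t)=\sum_{n\ge0}\alpha_{G,n}t^n$, $B_G(t)=\sum_{n\ge0}\beta_{G,n}t^n$. *)

(* Defs.v *)
From mathcomp Require Import all_boot all_fingroup all_solvable.
Set Implicit Arguments. Unset Strict Implicit. Unset Printing Implicit Defensive.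
Local Open Scope group_scope.

(* A finite group is modelled as a finGroupType gT (the group is [set: gT]). *)

Definition AC_group (gT : finGroupType) : Prop :=
  forall x : gT, x \notin 'Z([set: gT]) -> abelian 'C[x].

Definition tconj (gT : finGroupType) (n : nat)
    (t : {ffun 'I_n -> gT}) (g : gT) : {ffun 'I_n -> gT} :=
  [ffun i => t i ^ g].

Definition torbit (gT : finGroupType) (n : nat) (t : {ffun 'I_n -> gT})
  : {set {ffun 'I_n -> gT}} := [set tconj t g | g : gT].

Definition pcomm (gT : finGroupType) (n : nat) (t : {ffun 'I_n -> gT}) : bool :=
  [forall i, forall j, t i * t j == t j * t i].

Definition alpha (gT : finGroupType) (n : nat) : nat :=
  #|[set torbit t | t : {ffun 'I_n -> gT}]|.

Definition beta (gT : finGroupType) (n : nat) : nat :=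
  #|[set torbit t | t in [pred t : {ffun 'I_n -> gT} | pcomm t]]|.

(* Main.v *)
Require Import Defs.
From mathcomp Require Import all_boot all_fingroup all_solvable all_algebra.
From mathcomp Require Import lra zify ring.
Set Implicit Arguments. Unset Strict Implicit. Unset Printing Implicit Defensive.
Local Open Scope group_scope.
Lemma inZP (gT : finGroupType) (x : gT) :
  reflect (forall y, commute x y) (x \in 'Z([set: gT])).
Proof.
apply: (iffP (centerP _ _)) => [[_ H] y | H]; first exact: H (in_setT y).
by split => // y _; apply: H.
Qed.

Lemma abel_comm (gT : finGroupType) (A : {set gT}) x y :
  abelian A -> x \in A -> y \in A -> commute x y.
Proof. by move=> /subsetP AA xA yA; move/centP: (AA x xA); apply. Qed.

Lemma tconj1 (gT : finGroupType) n (t : {ffun 'I_n -> gT}) : tconj t 1 = t.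
Proof. by apply/ffunP=> i; rewrite ffunE conjg1. Qed.

Lemma tconjM (gT : finGroupType) n (t : {ffun 'I_n -> gT}) g h :
  tconj t (g * h) = tconj (tconj t g) h.
Proof. by apply/ffunP=> i; rewrite !ffunE conjgM. Qed.

Definition tact (gT : finGroupType) n := TotalAction (@tconj1 gT n) (@tconjM gT n).

Lemma fix_tconj (gT : finGroupType) n (t : {ffun 'I_n -> gT}) g :
  (t \in afix (tact gT n) [set g]) = [forall i, t i \in 'C[g]].
Proof.
apply/afix1P/forallP => [H i | H].
  have := congr1 (fun u : {ffun _ -> _} => u i) H; rewrite /= ffunE => E.
  by apply/cent1P; apply/commgP; rewrite -conjg_fix E.
apply/ffunP => i; rewrite /= ffunE; apply/eqP.
by rewrite conjg_fix; apply/commgP; apply/cent1P.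
Qed.

Lemma orbitsE (gT : finGroupType) n (S : {set {ffun 'I_n -> gT}}) :
  orbit (tact gT n) [set: gT] @: S = [set torbit t | t in S].
Proof.
apply: eq_imset => t; apply/setP => u; apply/imsetP/imsetP => [[g _ ->]|[g _ ->]];
  by exists g.
Qed.

Lemma alphaE (gT : finGroupType) n :
  (alpha gT n * #|gT| = \sum_(g : gT) #|'C[g]| ^ n)%N.
Proof.
have acts : [acts [set: gT], on [set: {ffun 'I_n -> gT}] | tact gT n].
  by apply/actsP => g _ t; rewrite !inE.
have -> : alpha gT n = #|orbit (tact gT n) [set: gT]%G @: [set: {ffun 'I_n -> gT}]|.
  rewrite orbitsE /alpha; apply: eq_card => X.
  by apply/imsetP/imsetP => [[t _ ->]|[t _ ->]]; exists t.
rewrite -cardsT.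
have -> : #|[set: gT]| = #|[set: gT]%G| by [].
rewrite -(Frobenius_Cauchy acts).
rewrite (eq_bigl (fun _ => true)) => [|g]; last by rewrite inE.
apply: eq_bigr => g _.
rewrite -[in RHS](card_ord n) -card_ffun_on; apply: eq_card => t.
rewrite in_setI in_setT fix_tconj; apply/forallP/ffun_onP => H i; exact: H.
Qed.

Lemma betaE (gT : finGroupType) n :
  (beta gT n * #|gT|)%N =
  \sum_(g : gT) #|[set t : {ffun 'I_n -> gT} | pcomm t && [forall i, t i \in 'C[g]]]|.
Proof.
set S := [set t : {ffun 'I_n -> gT} | pcomm t].
have acts : [acts [set: gT], on S | tact gT n].
  apply/actsP => g _ t; rewrite !inE /pcomm /=.
  apply/forallP/forallP => H i; apply/forallP => j; have /forallP/(_ j) := H i.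
    by rewrite !ffunE -!conjMg => /eqP/conjg_inj ->.
  by rewrite !ffunE -!conjMg => /eqP ->.
have -> : beta gT n = #|orbit (tact gT n) [set: gT]%G @: S|.
  rewrite orbitsE /beta; apply: eq_card => X.
  by apply/imsetP/imsetP => [[t Ht ->]|[t Ht ->]]; exists t => //; move: Ht; rewrite !inE.
rewrite -cardsT.
have -> : #|[set: gT]| = #|[set: gT]%G| by [].
rewrite -(Frobenius_Cauchy acts).
rewrite (eq_bigl (fun _ => true)) => [|g]; last by rewrite inE.
apply: eq_bigr => g _; apply: eq_card => t.
by rewrite in_setI fix_tconj !inE.
Qed.
Definition zc (gT : finGroupType) := #|'Z([set: gT])|.
Definition Sn (gT : finGroupType) n :=
  (\sum_(x : gT | x \notin 'Z([set: gT])) #|'C[x]| ^ n)%N.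
Definition Pn (gT : finGroupType) n := #|[set t : {ffun 'I_n -> gT} | pcomm t]|.
Definition Qn (gT : finGroupType) n :=
  (\sum_(g : gT) #|[set t : {ffun 'I_n -> gT} | pcomm t && [forall i, t i \in 'C[g]]]|)%N.

Lemma centZ (gT : finGroupType) (g : gT) : g \in 'Z([set: gT]) -> 'C[g] = [set: gT].
Proof.
move/inZP => H; apply/setP => y; rewrite in_setT; apply/cent1P; exact/esym/H.
Qed.

Lemma fE (gT : finGroupType) n :
  (\sum_(g : gT) #|'C[g]| ^ n = zc gT * #|gT| ^ n + Sn gT n)%N.
Proof.
rewrite (bigID (fun g => g \in 'Z([set: gT]))) /=; congr (_ + _).
rewrite (eq_bigr (fun _ => #|gT| ^ n)%N) => [|g Hg]; last by rewrite centZ // cardsT.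
by rewrite sum_nat_const.
Qed.

Lemma QE (gT : finGroupType) n : AC_group gT ->
  Qn gT n = (zc gT * Pn gT n + Sn gT n)%N.
Proof.
move=> AC; rewrite /Qn (bigID (fun g => g \in 'Z([set: gT]))) /=; congr (_ + _).
  rewrite (eq_bigr (fun _ => Pn gT n)) => [|g Hg]; first by rewrite sum_nat_const.
  apply: eq_card => t; rewrite !inE centZ //.
  apply/andP/idP => [[]//|H]; split => //; apply/forallP => i; exact: in_setT.
apply: eq_bigr => g Hg.
rewrite -[n in (_ ^ n)%N](card_ord n) -card_ffun_on; apply: eq_card => t.
rewrite !inE; apply/andP/ffun_onP => [[_ /forallP H] i | H]; first exact: H.
split; last by apply/forallP.
apply/forallP => i; apply/forallP => j; apply/eqP.
exact: (abel_comm (AC g Hg) (H i) (H j)).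
Qed.

Definition consf (gT : finGroupType) n (x : gT) (t : {ffun 'I_n -> gT}) :
  {ffun 'I_n.+1 -> gT} :=
  [ffun i => if unlift ord0 i is Some j then t j else x].
Definition tailf (gT : finGroupType) n (u : {ffun 'I_n.+1 -> gT}) :
  {ffun 'I_n -> gT} := [ffun j => u (lift ord0 j)].

Lemma tail_consf (gT : finGroupType) n x (t : {ffun 'I_n -> gT}) :
  tailf (consf x t) = t.
Proof. by apply/ffunP => j; rewrite !ffunE liftK. Qed.

Lemma consf0 (gT : finGroupType) n x (t : {ffun 'I_n -> gT}) :
  consf x t ord0 = x.
Proof. by rewrite ffunE unlift_none. Qed.

Lemma consf_tail (gT : finGroupType) n (u : {ffun 'I_n.+1 -> gT}) :
  consf (u ord0) (tailf u) = u.
Proof.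
apply/ffunP => i; rewrite ffunE; case: unliftP => [j ->|->] //.
by rewrite ffunE.
Qed.

Lemma pcomm_consf (gT : finGroupType) n x (t : {ffun 'I_n -> gT}) :
  pcomm (consf x t) = pcomm t && [forall i, t i \in 'C[x]].
Proof.
apply/forallP/andP => [H | [/forallP H1 /forallP H2] i].
  split.
    apply/forallP => i; apply/forallP => j.
    by have /forallP/(_ (lift ord0 j)) := H (lift ord0 i); rewrite !ffunE !liftK.
  apply/forallP => i; apply/cent1P; apply/eqP.
  by have /forallP/(_ ord0) := H (lift ord0 i); rewrite !ffunE liftK unlift_none.
apply/forallP => j; rewrite !ffunE.
case: unliftP => [i' _|_]; case: unliftP => [j' _|_] //.
- by have /forallP := H1 i'; apply.
- by apply/eqP; apply/cent1P/H2.
- by apply/eqP; apply/esym/cent1P/H2.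
Qed.

Lemma P_succ (gT : finGroupType) n : Pn gT n.+1 = Qn gT n.
Proof.
rewrite /Pn /Qn -sum1_card.
rewrite (partition_big (fun u : {ffun 'I_n.+1 -> gT} => u ord0) xpredT) //=.
apply: eq_bigr => x _; rewrite sum1_card.
have inj : injective (@consf gT n x) by apply: (can_inj (@tail_consf gT n x)).
rewrite -(card_imset _ inj); apply: eq_card => u.
transitivity (pcomm u && (u ord0 == x)); first by rewrite unfold_in inE.
 apply/andP/imsetP => [[pu /eqP u0]|[t Ht ->]].
  exists (tailf u); last by rewrite -u0 consf_tail.
  by rewrite inE -(pcomm_consf x) -u0 consf_tail.
by rewrite consf0 pcomm_consf; rewrite inE in Ht.
Qed.

Lemma P0 (gT : finGroupType) : Pn gT 0 = 1%N.
Proof.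
rewrite /Pn (_ : [set t | pcomm t] = setT); first by rewrite cardsT card_ffun card_ord.
by apply/setP => t; rewrite !inE; apply/forallP => -[].
Qed.
Lemma ZsubC (gT : finGroupType) (x : gT) : 'Z([set: gT]) \subset 'C[x]%g.
Proof. by apply/subsetP => y /inZP H; apply/cent1P/H. Qed.

Lemma z_lt_c (gT : finGroupType) (x : gT) :
  x \notin 'Z([set: gT]) -> (zc gT < #|'C[x]%g|)%N.
Proof.
move=> xZ; apply: proper_card; apply/properP; split; first exact: ZsubC.
by exists x => //; apply: cent1id.
Qed.

Lemma c_lt_N (gT : finGroupType) (x : gT) :
  x \notin 'Z([set: gT]) -> (#|'C[x]%g| < #|gT|)%N.
Proof.
move=> xZ; rewrite -cardsT; apply: proper_card; rewrite properT.
apply: contra xZ => /eqP E; apply/inZP => y.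
have : y \in 'C[x]%g by rewrite E in_setT.
by move/cent1P.
Qed.

Lemma cent_same (gT : finGroupType) (x w : gT) : AC_group gT ->
  x \notin 'Z([set: gT]) -> w \notin 'Z([set: gT]) -> w \in 'C[x]%g ->
  'C[w]%g = 'C[x]%g.
Proof.
move=> AC xZ wZ wC; apply/eqP; rewrite eqEsubset; apply/andP; split.
  apply/subsetP => v vC; apply/cent1P.
  have xw : x \in 'C[w]%g by apply/cent1P; move/cent1P: wC.
  exact: (abel_comm (AC w wZ) vC xw).
apply/subsetP => v vC; apply/cent1P.
exact: (abel_comm (AC x xZ) vC wC).
Qed.

Import GRing.Theory Num.Theory.
Local Open Scope ring_scope.
Definition wt (gT : finGroupType) (x : gT) : rat :=
  ((#|'C[x]%g| - zc gT)%N%:R)^-1.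

Lemma w0_neq (gT : finGroupType) : AC_group gT ->
  \sum_(x : gT | x \notin 'Z([set: gT])) wt x != 1.
Proof.
move=> AC.
have wpos : forall x : gT, x \notin 'Z([set: gT]) -> 0 < wt x.
  move=> x xZ; rewrite /wt invr_gt0 ltr0n subn_gt0; exact: z_lt_c.
case: (boolP [exists x : gT, x \notin 'Z([set: gT])]) => [/existsP[x xZ] | /existsP nZ].
  have : ~~ ('C[x]%g == [set: gT]).
    apply: contra xZ => /eqP E; apply/inZP => y.
    have : y \in 'C[x]%g by rewrite E in_setT.
    by move/cent1P.
  rewrite -properT => /properP[_ [y _ yC]].
  have yZ : y \notin 'Z([set: gT]) by apply: contra yC; apply: (subsetP (ZsubC x)).
  rewrite (bigID (fun w => w \in 'C[x]%g)) /=.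
  have -> : \sum_(i | (i \notin 'Z([set: gT])) && (i \in 'C[x]%g)) wt i = 1.
    rewrite (eq_bigr (fun _ => wt x)) => [|w /andP[wZ wC]]; last first.
      by rewrite /wt (cent_same AC xZ wZ wC).
    rewrite sumr_const.
    have -> : #|[pred i | (i \notin 'Z([set: gT])) && (i \in 'C[x]%g)]| =
              #|'C[x]%g :\: 'Z([set: gT])|.
      by apply: eq_card => w; rewrite !inE andbC.
    rewrite cardsDS ?ZsubC // /wt /zc.
    set k := (#|'C[x]%g| - #|'Z([set: gT])|)%N.
    set r : rat := k%:R.
    rewrite -mulr_natr /r mulVf //.
    by rewrite pnatr_eq0 -lt0n subn_gt0 (z_lt_c xZ).
  rewrite (bigD1 y) /=; last by rewrite yZ yC.
  have := wpos y yZ.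
  have : 0 <= \sum_(i | ((i \notin 'Z([set: gT])) && (i \notin 'C[x]%g)) && (i != y)) wt i.
    by apply: sumr_ge0 => i /andP[/andP[iZ _] _]; apply: order.Order.POrderTheory.ltW; apply: wpos.
  move=> H1 H2; apply/eqP => E; lra.
rewrite big_pred0 ?oner_neq0 // => x; apply/negbTE/negP => xZ; apply: nZ; exists x; exact: xZ.
Qed.
Lemma expuniq (s : seq (rat * nat)) :
  (forall n, \sum_(p <- s) p.1 * (p.2)%:R ^+ n = 0) ->
  forall b : nat, \sum_(p <- s | p.2 == b) p.1 = 0.
Proof.
move=> H b; move: {2}(size s) (leqnn (size s)) => m.
elim: m s H => [|m IH] s H Hs.
  by move: Hs; rewrite leqn0 size_eq0 => /eqP ->; rewrite big_nil.
case: (boolP (has (fun p : rat * nat => p.2 != b) s)) => [/hasP[q qs qb] | hn]; last first.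
  have al : all (fun p : rat * nat => p.2 == b) s.
    by apply/allP => p ps; move/hasPn: hn => /(_ p ps); rewrite negbK.
  rewrite -big_filter (all_filterP al).
  have := H 0%N; rewrite (eq_bigr (fun p : rat * nat => p.1)) => [//|p _].
  by rewrite expr0 mulr1.
set g := q.2.
pose s' := [seq ((p.2%:R - g%:R) * p.1, p.2) | p <- s & p.2 != g].
have Hs' : (size s' <= m)%N.
  rewrite size_map size_filter.
  have c1 : (0 < count (fun p : rat * nat => p.2 == g) s)%N.
    by rewrite -has_count; apply/hasP; exists q.
  have c2 := count_predC (fun p : rat * nat => p.2 == g) s.
  change (count (predC (fun p : rat * nat => p.2 == g)) s <= m)%N.
  move: Hs c1 c2; set a := count _ _; set c := count _ _; lia.
have H' : forall n, \sum_(p <- s') p.1 * (p.2)%:R ^+ n = 0.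
  move=> n; rewrite big_map big_filter /=.
  transitivity (\sum_(p <- s) ((p.2%:R - g%:R) * p.1 * p.2%:R ^+ n)).
    rewrite big_mkcond /=; apply: eq_bigr => p _.
    case: eqP => [-> | //]; by rewrite subrr !mul0r.
  transitivity (\sum_(p <- s) (p.1 * p.2%:R ^+ n.+1 - g%:R * (p.1 * p.2%:R ^+ n))).
    by apply: eq_bigr => p _; rewrite exprS; ring.
  rewrite sumrB -mulr_sumr (H n.+1) (H n); by rewrite mulr0 subrr.
have := IH s' H' Hs'.
rewrite big_map big_filter_cond /=.
rewrite (eq_bigl (fun p : rat * nat => p.2 == b)) => [|p]; last first.
  by case: eqP => [->|_] //=; apply/esym/negbTE.
under eq_bigr => p /eqP -> do [].
rewrite -mulr_sumr => /eqP; rewrite mulf_eq0 => /orP[|/eqP //].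
by rewrite subr_eq0 eqr_nat eq_sym (negbTE qb).
Qed.

Lemma expuniq2 (gT hT : finType) (PG : pred gT) (PH : pred hT)
  (wG : gT -> rat) (bG : gT -> nat) (wH : hT -> rat) (bH : hT -> nat)
  (a1 a2 : rat) (b1 b2 beta : nat) :
  (forall n, a1 * b1%:R ^+ n + \sum_(x | PG x) wG x * (bG x)%:R ^+ n =
             a2 * b2%:R ^+ n + \sum_(y | PH y) wH y * (bH y)%:R ^+ n) ->
  (forall x, PG x -> bG x != beta) -> (forall y, PH y -> bH y != beta) ->
  (if b1 == beta then a1 else 0) = (if b2 == beta then a2 else 0).
Proof.
move=> E HG HH.
pose s := (a1, b1) :: [seq (wG x, bG x) | x <- enum PG] ++
          (- a2, b2) :: [seq (- wH y, bH y) | y <- enum PH].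
have H : forall n, \sum_(p <- s) p.1 * (p.2)%:R ^+ n = 0.
  move=> n; rewrite big_cons big_cat big_cons !big_map /= !big_enum /=.
  rewrite (eq_bigl (fun x => PG x)) // (eq_bigl (fun x => PH x)) // (eq_bigr (fun y => - (wH y * (bH y)%:R ^+ n))) => [|y _]; last by rewrite mulNr.
  have En := E n; rewrite sumrN mulNr; lra.
have := expuniq H beta.
rewrite big_cons big_cat big_cons !big_map /=.
rewrite big1_seq => [|x /andP[/= bx]]; last by rewrite mem_enum => /HG; rewrite bx.
rewrite big1_seq => [|x /andP[/= bx]]; last by rewrite mem_enum => /HH; rewrite bx.
case: (b1 == beta); case: (b2 == beta); rewrite ?addr0 ?add0r //.
- by move/eqP; rewrite subr_eq0 => /eqP.
- by move/eqP; rewrite oppr_eq0 => /eqP ->.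
Qed.
Definition W (gT : finGroupType) : rat := \sum_(x : gT | x \notin 'Z([set: gT])) wt x.

Lemma Pclosed (gT : finGroupType) n : AC_group gT ->
  (Pn gT n)%:R = (zc gT)%:R ^+ n * (1 - W gT) +
    \sum_(x : gT | x \notin 'Z([set: gT])) wt x * (#|'C[x]|)%:R ^+ n :> rat.
Proof.
move=> AC; elim: n => [|n IH].
  rewrite P0 expr0 mul1r (eq_bigr (@wt gT)) => [|x _]; last by rewrite expr0 mulr1.
  rewrite /W; lra.
rewrite P_succ QE // natrD natrM IH /Sn natr_sum.
have key : \sum_(x : gT | x \notin 'Z([set: gT])) wt x * (#|'C[x]|)%:R ^+ n.+1 =
   (zc gT)%:R * \sum_(x : gT | x \notin 'Z([set: gT])) wt x * (#|'C[x]|)%:R ^+ n +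
   \sum_(x : gT | x \notin 'Z([set: gT])) ((#|'C[x]| ^ n)%N)%:R.
  rewrite mulr_sumr -big_split /=; apply: eq_bigr => x xZ; rewrite natrX.
  have E : wt x * ((#|'C[x]|)%:R - (zc gT)%:R) = 1.
    rewrite /wt natrB; last exact: ltnW (z_lt_c xZ).
    rewrite mulVf // subr_eq0 eqr_nat; apply/eqP => e.
    by have := z_lt_c xZ; rewrite e ltnn.
  transitivity ((#|'C[x]|)%:R ^+ n * (wt x * ((#|'C[x]|)%:R - (zc gT)%:R)) +
     (zc gT)%:R * (wt x * (#|'C[x]|)%:R ^+ n)); first by rewrite exprS; ring.
  by rewrite E mulr1 addrC.
rewrite key exprS; ring.
Qed.

Lemma Sn_rat (gT : finGroupType) n :
  (Sn gT n)%:R = \sum_(x : gT | x \notin 'Z([set: gT])) 1 * (#|'C[x]|)%:R ^+ n :> rat.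
Proof. by rewrite /Sn natr_sum; apply: eq_bigr => x _; rewrite natrX mul1r. Qed.

Lemma zle (gT hT : finGroupType) : AC_group gT -> AC_group hT ->
  (forall n, Pn gT n = Pn hT n) -> ~ (zc gT < zc hT)%N.
Proof.
move=> ACG ACH PE lt.
have := @expuniq2 gT hT (fun x => x \notin 'Z([set: gT])) (fun y => y \notin 'Z([set: hT]))
  (@wt gT) (fun x => #|'C[x]|) (@wt hT) (fun y => #|'C[y]|)
  (1 - W gT) (1 - W hT) (zc gT) (zc hT) (zc gT).
have lt' : (zc hT == zc gT) = false by apply: gtn_eqF.
rewrite eqxx lt' => H.
have : 1 - W gT = 0.
  apply: H.
  - move=> n; rewrite mulrC -Pclosed // PE Pclosed //; ring.
  - by move=> x xZ; rewrite /= gtn_eqF // z_lt_c.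
  - by move=> y yZ; rewrite /= gtn_eqF // (ltn_trans lt) // z_lt_c.
move/eqP; rewrite subr_eq0 eq_sym; apply/negP; exact: w0_neq.
Qed.

Theorem theorem6p5 (gT hT : finGroupType) :
  AC_group gT -> AC_group hT -> #|[set: gT]| = #|[set: hT]| ->
  ((forall n : nat, alpha gT n = alpha hT n) <->
   (forall n : nat, beta gT n = beta hT n)).
Proof.
move=> ACG ACH; rewrite !cardsT => EN.
have Npos : (0 < #|gT|)%N by apply/card_gt0P; exists 1%g.
have bq : forall (T : finGroupType) n, (beta T n * #|T|)%N = Qn T n := betaE.
have aq : forall (T : finGroupType) n,
    (alpha T n * #|T|)%N = (zc T * #|T| ^ n + Sn T n)%N.
  by move=> T n; rewrite alphaE fE.
split => [Ha | Hb].
  have Hf : forall n, (zc gT * #|gT| ^ n + Sn gT n = zc hT * #|gT| ^ n + Sn hT n)%N.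
    by move=> n; rewrite -aq Ha EN aq.
  have zE : zc gT = zc hT.
    have := @expuniq2 gT hT (fun x => x \notin 'Z([set: gT])) (fun y => y \notin 'Z([set: hT]))
      (fun _ => 1) (fun x => #|'C[x]|) (fun _ => 1) (fun y => #|'C[y]|)
      (zc gT)%:R (zc hT)%:R #|gT| #|gT| #|gT|.
    rewrite eqxx => H.
    apply/eqP; have e := eqr_nat rat; rewrite -e; apply/eqP; apply: H.
    - move=> n; rewrite -!Sn_rat -!natrX -!natrM -!natrD; congr (_%:R); exact: Hf.
    - by move=> x xZ; rewrite /= ltn_eqF // c_lt_N.
    - by move=> y yZ; rewrite /= ltn_eqF //; move: (c_lt_N yZ); rewrite EN.
  have SE : forall n, Sn gT n = Sn hT n.
    by move=> n; have := Hf n; rewrite zE => /addnI.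
  have PE : forall n, Pn gT n = Pn hT n.
    by elim => [|n IH]; rewrite ?P0 // !P_succ !QE // IH zE SE.
  move=> n; apply/eqP; rewrite -(eqn_pmul2r Npos) {2}EN !bq.
  by rewrite !QE // zE PE SE.
have QE' : forall n, Qn gT n = Qn hT n by move=> n; rewrite -!bq Hb EN.
have PE : forall n, Pn gT n = Pn hT n by case => [|n]; rewrite ?P0 // !P_succ QE'.
have zE : zc gT = zc hT.
  case: (ltngtP (zc gT) (zc hT)) => // h; exfalso.
  - exact: (zle ACG ACH PE h).
  - by apply: (zle ACH ACG _ h) => n; rewrite PE.
have SE : forall n, Sn gT n = Sn hT n.
  move=> n; have h1 := QE n ACG; have h2 := QE n ACH.
  rewrite QE' h2 zE PE in h1; exact/esym/(addnI h1).
move=> n; apply/eqP; rewrite -(eqn_pmul2r Npos) {2}EN !aq.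
by rewrite zE SE EN.
Qed.
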